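(* Let $d\ge2$ and let $G$ be a connected graph with $E$ edges in which every vertex has degree at most $d^2$. Let $x,y$ be vertices at graph distance $D(x,y)$, and run the Markov chain $M_0$ (defined in the context) starting from ''N'' on $x$ and ''I'' elsewhere. Then: 1. The expected number of steps until vertex $y$ is first labeled ''N'' is $O(E\cdot D(x,y))$. 2. There are constants $C,c>0$ such that, with probability at least $1-e^{-c\,D(x,y)}$, vertex $y$ is labeled ''N'' at some step within the first $C\,E\,D(x,y)$ steps.
   Context: **The Markov chain $M_0$** on a graph $G$ with local dimension $d$ is defined as follows. - The states are labelings of the vertices of $G$ by ''N'' or ''I''. - At each step a uniformly random edge of $G$ is chosen and the labels on its two endpoints are updated: - ''II'' stays ''II''; - any other pair of labels becomes ''IN'' with probability $1/(d^2+1)$, ''NI'' with probability $1/(d^2+1)$, and ''NN'' with probability $(d^2-1)/(d^2+1)$. $D(x,y)$ denotes the graph distance between $x$ and $y$. *)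

(* Defs.v *)
From HB Require Import structures.
From mathcomp Require Import all_boot.
From Stdlib Require Import Reals.

Set Implicit Arguments.
Unset Strict Implicit.
Unset Printing Implicit Defensive.

(* Labels: a state is a labeling {ffun V -> bool}; true = "N", false = "I". *)

Definition Rsum (T : finType) (f : T -> R) : R :=
  foldr (fun x acc => Rplus (f x) acc) 0%R (enum T).

Definition Rsum_lt (T : nat) (f : nat -> R) : R :=
  foldr (fun t acc => Rplus (f t) acc) 0%R (iota 0 T).

(* A simple graph is a symmetric irreflexive relation adj on a finType V.
   narcs = number of ordered adjacent pairs (= 2E), nedges = E. *)
Definition narcs (V : finType) (adj : rel V) : nat :=
  #|[pred p : V * V | adj p.1 p.2]|.

Definition nedges (V : finType) (adj : rel V) : nat := (narcs adj)./2.

Definition is_dist (V : finType) (adj : rel V) (x y : V) (n : nat) : Prop :=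
  (exists p : seq V, path adj x p /\ last x p = y /\ size p = n) /\
  (forall p : seq V, path adj x p -> last x p = y -> (n <= size p)%N).

Definition pair_update (d : nat) (a b a' b' : bool) : R :=
  if ~~ a && ~~ b then (if ~~ a' && ~~ b' then 1%R else 0%R)
  else
    let q := (INR (d * d) + 1)%R in
    match a', b' with
    | false, true => (1 / q)%R
    | true, false => (1 / q)%R
    | true, true => ((INR (d * d) - 1) / q)%R
    | false, false => 0%R
    end.

Definition edge_kernel (V : finType) (d : nat) (u v : V)
  (s s' : {ffun V -> bool}) : R :=
  if [forall w, ((w != u) && (w != v)) ==> (s' w == s w)]
  then pair_update d (s u) (s v) (s' u) (s' v) else 0%R.

(* One step of M_0: uniform random edge. We average over the 2E ordered
   pairs; since edge_kernel is symmetric in (u,v) this is the same as the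
   uniform choice among the E unordered edges. *)
Definition M0_kernel (V : finType) (d : nat) (adj : rel V)
  (s s' : {ffun V -> bool}) : R :=
  Rsum (fun p : V * V =>
          if adj p.1 p.2 then (edge_kernel d p.1 p.2 s s' / INR (narcs adj))%R
          else 0%R).

(* avoid d adj y t s = probability that, starting from state s, vertex y is
   labeled "I" at all times 0,1,...,t (i.e. hitting time of "N" at y is > t).
   Defined by the first-step (Markov) decomposition of path probabilities. *)
Fixpoint avoid (V : finType) (d : nat) (adj : rel V) (y : V) (t : nat)
  (s : {ffun V -> bool}) : R :=
  if s y then 0%R
  else match t with
       | 0 => 1%R
       | t'.+1 => Rsum (fun s' => (M0_kernel d adj s s' * avoid d adj y t' s')%R)
       end.

Definition init_state (V : finType) (x : V) : {ffun V -> bool} :=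
  [ffun v => v == x].

(* Main.v *)
Require Import Defs.
From HB Require Import structures.
From mathcomp Require Import all_boot zify.
From Stdlib Require Import Reals Lra.

Set Implicit Arguments.
Unset Strict Implicit.
Unset Printing Implicit Defensive.


HB.instance Definition _ := Monoid.isComLaw.Build R 0%R Rplus (fun a b c => esym (Rplus_assoc a b c)) Rplus_comm Rplus_0_l.
HB.instance Definition _ := Monoid.isMulLaw.Build R 0%R Rmult Rmult_0_l Rmult_0_r.
HB.instance Definition _ := Monoid.isAddLaw.Build R Rmult Rplus Rmult_plus_distr_r Rmult_plus_distr_l.

Notation "\rsum_ ( i : T ) F" := (\big[Rplus/0%R]_(i : T) F) (at level 41, F at level 41, i, T at level 50).

Lemma RsumE (T : finType) (f : T -> R) : Rsum f = \big[Rplus/0%R]_(x : T) f x.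
Proof. by rewrite /Rsum -big_enum unlock. Qed.
Lemma Rsum_ltE T (f : nat -> R) : Rsum_lt T f = \big[Rplus/0%R]_(0 <= t < T) f t.
Proof. by rewrite /Rsum_lt unlock /index_iota subn0. Qed.

Lemma big_Rle (I : Type) (r : seq I) (P : pred I) (F G : I -> R) :
  (forall i, P i -> (F i <= G i)%R) ->
  (\big[Rplus/0%R]_(i <- r | P i) F i <= \big[Rplus/0%R]_(i <- r | P i) G i)%R.
Proof.
move=> H; apply: (big_ind2 (fun a b => (a <= b)%R)); [lra| |exact H].
by move=> ? ? ? ? ? ?; lra.
Qed.

Lemma big_Rge0 (I : Type) (r : seq I) (P : pred I) (F : I -> R) :
  (forall i, P i -> (0 <= F i)%R) -> (0 <= \big[Rplus/0%R]_(i <- r | P i) F i)%R.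
Proof.
move=> H; apply: (big_ind (fun a => (0 <= a)%R)); [lra| |exact H].
by move=> ? ? ? ?; lra.
Qed.

Lemma big_constR (I : finType) (P : pred I) (r : R) :
  \big[Rplus/0%R]_(i : I) (if P i then r else 0%R) = (INR #|P| * r)%R.
Proof.
rewrite -big_mkcond big_const; elim: #|_| => [|n IH] /=; first lra.
rewrite -/(INR n.+1) S_INR.
have -> : iter n (Rplus r) 0%R = (INR n * r)%R by exact IH.
lra.
Qed.

Fixpoint reach (V : finType) (adj : rel V) (y : V) (k : nat) (v : V) : bool :=
  match k with
  | 0 => v == y
  | k'.+1 => reach adj y k' v || [exists w, adj v w && reach adj y k' w]
  end.

Lemma reach_path (V : finType) (adj : rel V) y v p :
  path adj v p -> last v p = y -> reach adj y (size p) v.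
Proof.
elim: p v => [|w p IH] v /=; first by move=> _ ->.
move=> /andP[avw pw] l; apply/orP; right; apply/existsP; exists w.
by rewrite avw IH.
Qed.

Lemma reach_ex (V : finType) (adj : rel V) y :
  (forall u v, connect adj u v) -> forall v, exists k, reach adj y k v.
Proof.
move=> C v; have /connectP [p pp lp] := C v y.
by exists (size p); apply: reach_path pp (esym lp).
Qed.

Definition delta (V : finType) (adj : rel V) y
  (H : forall v, exists k, reach adj y k v) (v : V) : nat := ex_minn (H v).

Lemma delta0 (V : finType) (adj : rel V) y H v : delta (adj:=adj) (y:=y) H v = 0%N -> v = y.
Proof. by rewrite /delta; case: ex_minnP => m rm _ m0; subst m; move/eqP: rm. Qed.

Lemma delta_le (V : finType) (adj : rel V) y H v k :
  reach adj y k v -> (delta (adj:=adj) (y:=y) H v <= k)%N.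
Proof. by rewrite /delta; case: ex_minnP => m _ mm; apply: mm. Qed.

Lemma delta_adj (V : finType) (adj : rel V) y H u v :
  adj u v -> (delta (adj:=adj) (y:=y) H u <= (delta H v).+1)%N.
Proof.
move=> auv; apply: delta_le => /=; apply/orP; right; apply/existsP; exists v.
rewrite auv /=; rewrite /delta; by case: (ex_minnP (H v)).
Qed.

Lemma delta_down (V : finType) (adj : rel V) y H v :
  (0 < delta (adj:=adj) (y:=y) H v)%N ->
  exists2 w, adj v w & (delta H w < delta H v)%N.
Proof.
have rk : reach adj y (delta H v) v by rewrite /delta; case: (ex_minnP (H v)).
have mk : forall n, reach adj y n v -> (delta H v <= n)%N by move=> n; apply: delta_le.
move: (delta H v) rk mk => [|k] //= /orP [rkv|/existsP[w /andP[avw rw]]] mk _.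
  by have := mk _ rkv; rewrite ltnn.
by exists w => //; rewrite ltnS; apply: delta_le.
Qed.

Definition hmin (V : finType) (dl : V -> nat) (s : {ffun V -> bool}) : nat :=
  if [pick w | s w] is Some w0 then dl [arg min_(i < w0 | s i) dl i] else 0%N.

Lemma hmin_le (V : finType) (dl : V -> nat) (s : {ffun V -> bool}) w : s w -> (hmin dl s <= dl w)%N.
Proof.
rewrite /hmin; case: pickP => [w0 sw0|/(_ w) ->//] sw.
by case: arg_minnP => // i _ mi; apply: mi.
Qed.

Lemma hmin_eq (V : finType) (dl : V -> nat) (s : {ffun V -> bool}) w : s w ->
  exists2 v0, s v0 & (hmin dl s = dl v0 /\ forall w, s w -> (dl v0 <= dl w)%N).
Proof.
rewrite /hmin; case: pickP => [w0 sw0|/(_ w) ->//] sw.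
by case: arg_minnP => // i si mi; exists i.
Qed.

Definition upd (V : finType) (s : {ffun V -> bool}) (u v : V) (a b : bool) : {ffun V -> bool} :=
  [ffun w => if w == u then a else if w == v then b else s w].

Lemma edge_sum (V : finType) d (u v : V) s (G : {ffun V -> bool} -> R) : u != v ->
  Rsum (fun s' => edge_kernel d u v s s' * G s')%R =
  \big[Rplus/0%R]_(ab : bool * bool)
     (pair_update d (s u) (s v) ab.1 ab.2 * G (upd s u v ab.1 ab.2))%R.
Proof.
move=> nuv; rewrite RsumE (partition_big (fun s' : {ffun V -> bool} => (s' u, s' v)) xpredT) //=.
apply: eq_bigr => [[a b]] _.
have vu : (v == u) = false by rewrite eq_sym (negbTE nuv).
rewrite (bigD1 (upd s u v a b)) /=; last by rewrite !ffunE eqxx vu eqxx.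
rewrite big1 ?Rplus_0_r.
  rewrite /edge_kernel.
  have -> : [forall w, ((w != u) && (w != v)) ==> (upd s u v a b w == s w)].
    apply/forallP => w; apply/implyP => /andP[wu wv].
    by rewrite ffunE (negbTE wu) (negbTE wv).
  by rewrite !ffunE eqxx vu eqxx.
move=> s' /andP[/eqP [su sv] ns'].
rewrite /edge_kernel; case: ifP => [/forallP agr|_]; last by rewrite Rmult_0_l.
case/eqP: ns'; apply/ffunP => w; rewrite ffunE.
case: eqP => [->|/eqP wu] //; case: eqP => [->|/eqP wv] //.
by have := agr w; rewrite wu wv /= => /eqP.
Qed.

Lemma sum_bool2 (F : bool * bool -> R) :
  \big[Rplus/0%R]_(ab : bool * bool) F ab =
  (F (true, true) + F (true, false) + (F (false, true) + F (false, false)))%R.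
Proof.
transitivity (\big[Rplus/0%R]_(p : bool * bool) F (p.1, p.2)); first by apply: eq_bigr => [[]].
by rewrite -(pair_bigA _ (fun a b => F (a, b))) !big_bool.
Qed.

Lemma kernel_sum (V : finType) d (adj : rel V) s (G : {ffun V -> bool} -> R) :
  Rsum (fun s' => M0_kernel d adj s s' * G s')%R =
  \big[Rplus/0%R]_(p : V * V) (if adj p.1 p.2 then
      (Rsum (fun s' => edge_kernel d p.1 p.2 s s' * G s') / INR (narcs adj))%R else 0%R).
Proof.
rewrite RsumE /M0_kernel.
under eq_bigr do rewrite RsumE big_distrl.
rewrite exchange_big; apply: eq_bigr => p _ /=.
case: ifP => _.
  rewrite RsumE /Rdiv big_distrl; apply: eq_bigr => s' _ /=; ring.
by rewrite big1 // => s' _; rewrite Rmult_0_l.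
Qed.

Lemma pu_ge0 d a b a' b' : (1 <= d)%N -> (0 <= pair_update d a b a' b')%R.
Proof.
move=> d1; have D1 : (1 <= INR (d * d))%R by rewrite -/(INR 1); apply: le_INR; apply/leP; rewrite muln_gt0 d1.
rewrite /pair_update; case: a; case: b; case: a'; case: b' => /=;
 try (apply: Rmult_le_pos; [lra | apply: Rlt_le; apply: Rinv_0_lt_compat; lra]); lra.
Qed.

Lemma ek_ge0 (V : finType) d (u v : V) s s' : (1 <= d)%N -> (0 <= edge_kernel d u v s s')%R.
Proof. by move=> d1; rewrite /edge_kernel; case: ifP => _; [apply: pu_ge0|lra]. Qed.

Lemma K_ge0 (V : finType) d (adj : rel V) s s' : (1 <= d)%N -> (0 <= M0_kernel d adj s s')%R.
Proof.
move=> d1; rewrite /M0_kernel RsumE; apply: big_Rge0 => p _; case: ifP => Hp; last lra.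
apply: Rmult_le_pos; first exact: ek_ge0.
apply: Rlt_le; apply: Rinv_0_lt_compat; apply: lt_0_INR; apply/ltP.
by apply/card_gt0P; exists p; rewrite inE.
Qed.

Lemma K_zero (V : finType) d (adj : rel V) (s s' : {ffun V -> bool}) w :
  s w -> (forall w, s' w = false) -> M0_kernel d adj s s' = 0%R.
Proof.
move=> sw s'0; rewrite /M0_kernel RsumE big1 // => p _.
case: ifP => // _; rewrite /edge_kernel; case: ifP => [/forallP agr|_]; last by rewrite /Rdiv Rmult_0_l.
rewrite !s'0.
have : s p.1 || s p.2.
  case: (boolP ((w != p.1) && (w != p.2))) => [h|].
    by have := agr w; rewrite h s'0 sw.
  by rewrite negb_and !negbK => /orP[/eqP<-|/eqP<-]; rewrite sw ?orbT.
rewrite /pair_update; case: (s p.1); case: (s p.2) => //= _; by rewrite /Rdiv Rmult_0_l.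
Qed.

Lemma pu_sum1 d a b : (1 <= d)%N ->
  (pair_update d a b true true + pair_update d a b true false +
   (pair_update d a b false true + pair_update d a b false false))%R = 1%R.
Proof.
move=> d1; have D1 : (1 <= INR (d * d))%R by rewrite -/(INR 1); apply: le_INR; apply/leP; rewrite muln_gt0 d1.
rewrite /pair_update; case: a; case: b => /=; try lra; field; lra.
Qed.

Lemma updE (V : finType) (s : {ffun V -> bool}) u v a b z :
  upd s u v a b z = if z == u then a else if z == v then b else s z.
Proof. by rewrite ffunE. Qed.

Lemma comb4 c1 c2 c3 c4 x1 x2 x3 x4 y1 y2 y3 y4 :
  (0 <= c1)%R -> (0 <= c2)%R -> (0 <= c3)%R -> (0 <= c4)%R ->
  (x1 <= y1)%R -> (x2 <= y2)%R -> (x3 <= y3)%R -> (x4 <= y4)%R ->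
  (c1 * x1 + c2 * x2 + (c3 * x3 + c4 * x4) <= c1 * y1 + c2 * y2 + (c3 * y3 + c4 * y4))%R.
Proof.
move=> *; repeat apply: Rplus_le_compat; by apply: Rmult_le_compat_l.
Qed.

Lemma arc_bound (V : finType) d (H : {ffun V -> bool} -> nat) (dl : V -> nat)
    (F : nat -> R) (s : {ffun V -> bool}) (u v v0 w0 : V) :
  (1 <= d)%N ->
  (forall (s' : {ffun V -> bool}) w, s' w -> (H s' <= dl w)%N) ->
  (forall m n, (m <= n)%N -> (F m <= F n)%R) ->
  u != v -> s v0 -> (dl w0).+1 = dl v0 ->
  (u == v0 -> (dl v <= (dl v0).+1)%N) ->
  (v == v0 -> (dl u <= (dl v0).+1)%N) ->
  (\big[Rplus/0%R]_(ab : bool * bool)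
     (pair_update d (s u) (s v) ab.1 ab.2 * F (H (upd s u v ab.1 ab.2))) <=
   F (dl v0) +
   (if ((u == v0) || (v == v0)) && ~~ (((u, v) == (v0, w0)) || ((u, v) == (w0, v0)))
    then (F (dl v0).+1 - F (dl v0)) / (INR (d * d) + 1) else 0) -
   (if ((u, v) == (v0, w0)) || ((u, v) == (w0, v0))
    then INR (d * d) * (F (dl v0) - F (dl w0)) / (INR (d * d) + 1) else 0))%R.
Proof.
move=> d1 Hle Fmono nuv sv0 ew0 tu tv.
have D1 : (1 <= INR (d * d))%R by rewrite -/(INR 1); apply: le_INR; apply/leP; rewrite muln_gt0 d1.
have Fb : forall a b z, upd s u v a b z -> (dl z <= dl v0)%N ->
   (F (H (upd s u v a b)) <= F (dl v0))%R.
  move=> a b z uz hz; apply: Fmono; apply: leq_trans (Hle _ _ uz) hz.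
have Fb' : forall a b z m, upd s u v a b z -> (dl z <= m)%N ->
   (F (H (upd s u v a b)) <= F m)%R.
  move=> a b z m uz hz; apply: Fmono; apply: leq_trans (Hle _ _ uz) hz.
rewrite sum_bool2 /= !xpair_eqE.
have pge := pu_ge0 (s u) (s v) _ _ d1.
have psum := pu_sum1 (s u) (s v) d1.
have w0v0 : (v0 == w0) = false by apply/eqP => E; rewrite E in ew0; lia.
have w0v0' : (w0 == v0) = false by rewrite eq_sym.
have qp : (INR (d * d) + 1 <> 0)%R by lra.
case: (eqVneq u v0) => [Eu|nu].
  subst u; have vv0 : (v == v0) = false by rewrite eq_sym (negbTE nuv).
  have psum' := psum; move: pge psum'; rewrite vv0 w0v0 sv0 /= => pge psum'.
  case: (eqVneq v w0) => [Ev|nv].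
    subst v => /=.
    have h1 := Fb' true true w0 (dl w0) ltac:(by rewrite updE w0v0' eqxx) (leqnn _).
    have h2 := Fb true false v0 ltac:(by rewrite updE eqxx) (leqnn _).
    have h3 := Fb' false true w0 (dl w0) ltac:(by rewrite updE w0v0' eqxx) (leqnn _).
    apply: Rle_trans (comb4 (pge _ _) (pge _ _) (pge _ _) (pge _ _) h1 h2 h3 (Rle_refl _)) _.
    rewrite /pair_update /=; apply: Req_le; field; lra.
  rewrite /=.
  have h1 := Fb true true v0 ltac:(by rewrite updE eqxx) (leqnn _).
  have h2 := Fb true false v0 ltac:(by rewrite updE eqxx) (leqnn _).
  have h3 := Fb' false true v (dl v0).+1 ltac:(by rewrite updE vv0 eqxx) (tu (eqxx _)).
  apply: Rle_trans (comb4 (pge _ _) (pge _ _) (pge _ _) (pge _ _) h1 h2 h3 (Rle_refl _)) _.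
  rewrite /pair_update /=; apply: Req_le; field; lra.
have uv0 : (v0 == u) = false by rewrite eq_sym (negbTE nu).
case: (eqVneq v v0) => [Ev|nv'].
  subst v; have psum' := psum; move: pge psum'; rewrite sv0 /= andbT => pge psum'.
  have h2 := Fb true true v0 ltac:(by rewrite updE uv0 eqxx) (leqnn _).
  have h3 := Fb false true v0 ltac:(by rewrite updE uv0 eqxx) (leqnn _).
  case: (eqVneq u w0) => [Ew|nw].
    subst u => /=.
    have h1 := Fb' true true w0 (dl w0) ltac:(by rewrite updE eqxx) (leqnn _).
    have h1' := Fb' true false w0 (dl w0) ltac:(by rewrite updE eqxx) (leqnn _).
    apply: Rle_trans (comb4 (pge _ _) (pge _ _) (pge _ _) (pge _ _) h1 h1' h3 (Rle_refl _)) _.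
    rewrite /pair_update /= andbF; apply: Req_le; field; lra.
  rewrite /=.
  have h1 := Fb' true false u (dl v0).+1 ltac:(by rewrite updE eqxx) (tv (eqxx _)).
  apply: Rle_trans (comb4 (pge _ _) (pge _ _) (pge _ _) (pge _ _) h2 h1 h3 (Rle_refl _)) _.
  rewrite /pair_update /= andbF; apply: Req_le; field; lra.
rewrite /= andbF /=.
have nv0 : (v0 == v) = false by rewrite eq_sym (negbTE nv').
have hh : forall a b, (F (H (upd s u v a b)) <= F (dl v0))%R.
  by move=> a b; apply: (Fb a b v0 _ (leqnn _)); rewrite updE uv0 nv0.
apply: Rle_trans (comb4 (pge _ _) (pge _ _) (pge _ _) (pge _ _) (hh _ _) (hh _ _) (hh _ _) (hh _ _)) _.
apply: Req_le; rewrite -!Rmult_plus_distr_r psum; ring.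
Qed.

Lemma big_lin (I : finType) (f g h : I -> R) :
  \big[Rplus/0%R]_(i : I) (f i + g i - h i)%R =
  (\big[Rplus/0%R]_(i : I) f i + \big[Rplus/0%R]_(i : I) g i - \big[Rplus/0%R]_(i : I) h i)%R.
Proof.
rewrite /Rminus !big_split /=.
congr (_ + _)%R.
apply: (big_ind2 (fun a b => a = - b)%R) => //; first by rewrite Ropp_0.
by move=> ? ? ? ? -> ->; rewrite Ropp_plus_distr.
Qed.

Lemma cnt_nb (V : finType) (adj : rel V) v0 w0 : adj v0 w0 ->
  #|[pred v | adj v0 v && (v != w0)]| = #|[pred v | adj v0 v]|.-1.
Proof.
move=> a; rewrite (cardD1 w0 [pred v | adj v0 v]) inE a /=.
by apply: eq_card => v; rewrite !inE andbC.
Qed.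

Lemma cnt_touch (V : finType) (adj : rel V) d v0 w0 :
  symmetric adj -> adj v0 w0 -> (forall u, #|[pred v | adj u v]| <= d * d)%N ->
  (#|[pred p : V * V | adj p.1 p.2 && (((p.1 == v0) || (p.2 == v0)) &&
       ~~ (((p.1, p.2) == (v0, w0)) || ((p.1, p.2) == (w0, v0))))]| <= 2 * (d * d).-1)%N.
Proof.
move=> sym a deg.
set A := [set p : V * V | (p.1 == v0) && (adj v0 p.2 && (p.2 != w0))].
set B := [set p : V * V | (p.2 == v0) && (adj v0 p.1 && (p.1 != w0))].
have cA : #|A| = #|[pred v | adj v0 v]|.-1.
  rewrite -(cnt_nb a) -(mul1n #|[pred v | _]|).
  have -> : A = setX [set v0] [set v | adj v0 v && (v != w0)].
    by apply/setP => -[x y]; rewrite !inE /=; case: eqP => // ->.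
  by rewrite cardsX cards1 cardsE.
have cB : #|B| = #|[pred v | adj v0 v]|.-1.
  rewrite -(cnt_nb a) -(muln1 #|[pred v | _]|).
  have -> : B = setX [set v | adj v0 v && (v != w0)] [set v0].
    by apply/setP => -[x y]; rewrite !inE /= andbC; case: eqP => // ->.
  by rewrite cardsX cards1 cardsE.
apply: leq_trans (_ : #|A :|: B| <= _)%N.
  apply: subset_leq_card; apply/subsetP => -[x y]; rewrite !inE /= !xpair_eqE.
  case/andP=> axy /andP[/orP[/eqP ex|/eqP ey] nn].
    subst x; move: nn; rewrite eqxx /= negb_or => /andP[nn _].
    by rewrite axy nn.
  subst y; move: nn; rewrite eqxx andbT negb_or => /andP[_ nn].
  by rewrite -(sym x v0) axy nn ?orbT.
rewrite cardsU cA cB; have := deg v0; lia.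
Qed.

Lemma cnt_w0 (V : finType) (adj : rel V) v0 w0 :
  symmetric adj -> adj v0 w0 -> v0 != w0 ->
  #|[pred p : V * V | adj p.1 p.2 &&
       (((p.1, p.2) == (v0, w0)) || ((p.1, p.2) == (w0, v0)))]| = 2%N.
Proof.
move=> sym a nvw.
rewrite -(_ : #|pred2 (v0, w0) (w0, v0)| = 2%N); last first.
  by rewrite card2 xpair_eqE (negbTE nvw).
apply: eq_card => -[x y]; rewrite !inE /=.
case: eqP => [[-> ->]|_] /=; first by rewrite a.
by case: eqP => [[-> ->]|_] /=; rewrite ?andbF // -sym a.
Qed.

Lemma drift (V : finType) d (adj : rel V) (H : {ffun V -> bool} -> nat) (dl : V -> nat)
    (F : nat -> R) (s : {ffun V -> bool}) (v0 w0 : V) :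
  (1 <= d)%N -> symmetric adj -> irreflexive adj ->
  (forall u, #|[pred v | adj u v]| <= d * d)%N ->
  (forall (s' : {ffun V -> bool}) w, s' w -> (H s' <= dl w)%N) ->
  (forall m n, (m <= n)%N -> (F m <= F n)%R) ->
  (forall u v, adj u v -> (dl u <= (dl v).+1)%N) ->
  s v0 -> adj v0 w0 -> (dl w0).+1 = dl v0 ->
  (Rsum (fun s' => M0_kernel d adj s s' * F (H s')) <=
   F (dl v0) + 2 / (INR (narcs adj) * (INR (d * d) + 1)) *
     ((INR (d * d) - 1) * (F (dl v0).+1 - F (dl v0)) - INR (d * d) * (F (dl v0) - F (dl w0))))%R.
Proof.
move=> d1 sym irr deg Hle Fmono dadj sv0 a ew0.
have D1 : (1 <= INR (d * d))%R by rewrite -/(INR 1); apply: le_INR; apply/leP; rewrite muln_gt0 d1.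
have nvw : v0 != w0 by apply/eqP => E; rewrite E irr in a.
have Np : (0 < INR (narcs adj))%R.
  apply: lt_0_INR; apply/ltP; apply/card_gt0P; exists (v0, w0); by rewrite inE.
set N := INR (narcs adj) in Np *.
set q := (INR (d * d) + 1)%R.
set xx := ((F (dl v0).+1 - F (dl v0)) / q)%R.
set yy := (INR (d * d) * (F (dl v0) - F (dl w0)) / q)%R.
set tX := fun p : V * V => ((p.1 == v0) || (p.2 == v0)) &&
       ~~ (((p.1, p.2) == (v0, w0)) || ((p.1, p.2) == (w0, v0))).
set wA := fun p : V * V => ((p.1, p.2) == (v0, w0)) || ((p.1, p.2) == (w0, v0)).
rewrite kernel_sum.
refine (Rle_trans _ (\big[Rplus/0%R]_(p : V * V)
   (((if adj p.1 p.2 then F (dl v0) else 0) + (if adj p.1 p.2 && tX p then xx else 0)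
     - (if adj p.1 p.2 && wA p then yy else 0)) / N)%R) _ _ _).
  apply: big_Rle => -[u v] _ /=; case: ifP => auv /=; last first.
    by rewrite /Rdiv Rplus_0_l Rminus_0_r Rmult_0_l; lra.
  have nuv : u != v by apply/eqP => E; rewrite E irr in auv.
  rewrite edge_sum //; apply: Rmult_le_compat_r; first by apply: Rlt_le; apply: Rinv_0_lt_compat.
  apply: Rle_trans (arc_bound d1 Hle Fmono nuv sv0 ew0 _ _) _.
  - by move=> /eqP Eu; subst u; apply: dadj; rewrite sym.
  - by move=> /eqP Ev; subst v; apply: dadj.
  by rewrite /tX /wA /=; apply: Req_le.
rewrite /Rdiv -big_distrl /= big_lin !big_constR.
have c1 : #|(fun p : V * V => adj p.1 p.2)| = narcs adj by [].
have c3 : #|(fun p : V * V => adj p.1 p.2 && wA p)| = 2%N by apply: cnt_w0.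
have c2 : (#|(fun p : V * V => adj p.1 p.2 && tX p)| <= 2 * (d * d).-1)%N by apply: cnt_touch.
rewrite c1 c3 -/N.
have xx0 : (0 <= xx)%R.
  rewrite /xx /Rdiv; apply: Rmult_le_pos; last by apply: Rlt_le; apply: Rinv_0_lt_compat; rewrite /q; lra.
  have := Fmono _ _ (leqnSn (dl v0)); lra.
have c2' : (INR #|(fun p : V * V => adj p.1 p.2 && tX p)| <= 2 * (INR (d * d) - 1))%R.
  apply: Rle_trans (le_INR _ _ (leP c2)) _.
  have e : (2 * (d * d).-1 + 2)%N = (2 * (d * d))%N.
    have : (0 < d * d)%N by rewrite muln_gt0 d1.
    lia.
  have := f_equal INR e; rewrite plus_INR !mult_INR /=; lra.
have hc := Rmult_le_compat_r _ _ _ xx0 c2'.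
refine (Rle_trans _ ((N * F (dl v0) + 2 * (INR (d * d) - 1) * xx - INR 2 * yy) * / N) _ _ _).
  apply: Rmult_le_compat_r; first by apply: Rlt_le; apply: Rinv_0_lt_compat.
  rewrite /Rminus; apply: Rplus_le_compat_r; apply: Rplus_le_compat_l; exact: hc.
apply: Req_le; rewrite /xx /yy /q /=; field; split; lra.
Qed.

Lemma good_state (V : finType) (adj : rel V) y (Hr : forall v, exists k, reach adj y k v)
    (s : {ffun V -> bool}) w :
  s w -> s y = false ->
  exists v0 w0, [/\ s v0, hmin (delta Hr) s = delta Hr v0, adj v0 w0 &
                    (delta Hr w0).+1 = delta Hr v0].
Proof.
move=> sw sy; case: (hmin_eq (delta Hr) sw) => v0 sv0 [eh _].
have pos : (0 < delta Hr v0)%N.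
  rewrite lt0n; apply/eqP => /delta0 E; by rewrite -E sv0 in sy.
case: (delta_down pos) => w0 a lt.
have := delta_adj Hr a => le.
exists v0, w0; split => //; lia.
Qed.

Lemma avoid_N (V : finType) d (adj : rel V) y t (s : {ffun V -> bool}) :
  s y -> avoid d adj y t s = 0%R.
Proof. by case: t => [|t] /= ->. Qed.

Lemma avoid_S (V : finType) d (adj : rel V) y t (s : {ffun V -> bool}) :
  s y = false ->
  avoid d adj y t.+1 s = Rsum (fun s' => M0_kernel d adj s s' * avoid d adj y t s')%R.
Proof. by move=> /= ->. Qed.

Lemma avoid_0 (V : finType) d (adj : rel V) y (s : {ffun V -> bool}) :
  s y = false -> avoid d adj y 0 s = 1%R.
Proof. by move=> /= ->. Qed.

Lemma part1_ind (V : finType) d (adj : rel V) y (Hr : forall v, exists k, reach adj y k v) :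
  (2 <= d)%N -> symmetric adj -> irreflexive adj ->
  (forall u, #|[pred v | adj u v]| <= d * d)%N ->
  forall T (s : {ffun V -> bool}), (exists w, s w) ->
  (Rsum_lt T (fun t => avoid d adj y t s) <=
   INR (narcs adj) * (INR (d * d) + 1) / 2 * INR (hmin (delta Hr) s))%R.
Proof.
move=> d2 sym irr deg.
have d1 : (1 <= d)%N by lia.
have D1 : (1 <= INR (d * d))%R by rewrite -/(INR 1); apply: le_INR; apply/leP; rewrite muln_gt0 d1.
set al := (INR (narcs adj) * (INR (d * d) + 1) / 2)%R.
have al0 : (0 <= al)%R.
  rewrite /al /Rdiv; apply: Rmult_le_pos; last lra.
  apply: Rmult_le_pos; [apply: pos_INR|lra].
have Fmono : forall m n, (m <= n)%N -> (al * INR m <= al * INR n)%R.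
  by move=> m n mn; apply: Rmult_le_compat_l => //; apply: le_INR; apply/leP.
elim=> [|T IH] s [w sw].
  rewrite Rsum_ltE big_geq //; apply: Rmult_le_pos => //; apply: pos_INR.
rewrite Rsum_ltE big_nat_recl //.
case sy: (s y).
  rewrite big1 ?avoid_N // ?Rplus_0_r; last by move=> t _; rewrite avoid_N.
  apply: Rmult_le_pos => //; apply: pos_INR.
rewrite avoid_0 //.
under eq_bigr do rewrite avoid_S //.
rewrite -Rsum_ltE.
have -> : Rsum_lt T (fun t => Rsum (fun s' => M0_kernel d adj s s' * avoid d adj y t s'))%R
   = Rsum (fun s' => M0_kernel d adj s s' * Rsum_lt T (fun t => avoid d adj y t s'))%R.
  rewrite Rsum_ltE RsumE; under eq_bigr do rewrite RsumE.
  rewrite exchange_big /=; apply: eq_bigr => s' _; rewrite Rsum_ltE big_distrr //.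
have step : (Rsum (fun s' => M0_kernel d adj s s' * Rsum_lt T (fun t => avoid d adj y t s')) <=
             Rsum (fun s' => M0_kernel d adj s s' * (al * INR (hmin (delta Hr) s'))))%R.
  rewrite !RsumE; apply: big_Rle => s' _.
  case: (boolP [exists w, s' w]) => [/existsP [w' sw'] | ne].
    apply: Rmult_le_compat_l; first exact: K_ge0.
    by apply: IH; exists w'.
  rewrite (K_zero _ _ sw); first lra.
  by move=> z; apply/negbTE; move: ne; rewrite negb_exists => /forallP.
case: (good_state Hr sw sy) => v0 [w0 [sv0 eh a ew0]].
have dr := drift d1 sym irr deg (@hmin_le V (delta Hr)) Fmono (delta_adj Hr) sv0 a ew0.
rewrite eh.
have Np : (0 < INR (narcs adj))%R.
  apply: lt_0_INR; apply/ltP; apply/card_gt0P; exists (v0, w0); by rewrite inE.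
apply: (Rle_trans _ _ _ (Rplus_le_compat_l 1 _ _ step)).
have dr' : (Rsum (fun s' => M0_kernel d adj s s' * (al * INR (hmin (delta Hr) s'))) <=
   al * INR (delta Hr v0) + 2 / (INR (narcs adj) * (INR (d * d) + 1)) *
     ((INR (d * d) - 1) * (al * INR (delta Hr v0).+1 - al * INR (delta Hr v0)) -
      INR (d * d) * (al * INR (delta Hr v0) - al * INR (delta Hr w0))))%R := dr.
move: dr'; rewrite -ew0 !S_INR /al => {}dr.
have e : (INR (narcs adj) * (INR (d * d) + 1) / 2 * (INR (delta Hr w0) + 1) +
     2 / (INR (narcs adj) * (INR (d * d) + 1)) *
     ((INR (d * d) - 1) *
      (INR (narcs adj) * (INR (d * d) + 1) / 2 * (INR (delta Hr w0) + 1 + 1) -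
       INR (narcs adj) * (INR (d * d) + 1) / 2 * (INR (delta Hr w0) + 1)) -
      INR (d * d) *
      (INR (narcs adj) * (INR (d * d) + 1) / 2 * (INR (delta Hr w0) + 1) -
       INR (narcs adj) * (INR (d * d) + 1) / 2 * INR (delta Hr w0))) =
     INR (narcs adj) * (INR (d * d) + 1) / 2 * (INR (delta Hr w0) + 1) - 1)%R.
  field; lra.
lra.
Qed.

Lemma part2_ind (V : finType) d (adj : rel V) y (Hr : forall v, exists k, reach adj y k v) :
  (2 <= d)%N -> symmetric adj -> irreflexive adj ->
  (forall u, #|[pred v | adj u v]| <= d * d)%N -> (0 < narcs adj)%N ->
  forall T (s : {ffun V -> bool}), (exists w, s w) ->
  (avoid d adj y T s <=
   (1 - 2 / (INR (narcs adj) * (INR (d * d) + 1) ^ 2 * INR (d * d))) ^ T *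
   (1 + / INR (d * d)) ^ (hmin (delta Hr) s))%R.
Proof.
move=> d2 sym irr deg Npos.
have d1 : (1 <= d)%N by lia.
have D4 : (4 <= INR (d * d))%R.
  have : (4 <= d * d)%N by rewrite (_ : 4 = 2 * 2)%N //; apply: leq_mul.
  move=> /leP h; have := le_INR _ _ h; rewrite /=; lra.
have N1 : (1 <= INR (narcs adj))%R by rewrite -/(INR 1); apply: le_INR; apply/leP.
set N := INR (narcs adj) in N1 *.
set D := INR (d * d) in D4 *.
set rho := (1 - 2 / (N * (D + 1) ^ 2 * D))%R.
set lam := (1 + / D)%R.
have lam1 : (1 <= lam)%R by rewrite /lam; have := Rinv_0_lt_compat D ltac:(lra); lra.
have rho0 : (0 <= rho)%R.
  rewrite /rho; have h : (2 <= N * (D + 1) ^ 2 * D)%R.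
    have X1 : (1 <= (D + 1) ^ 2)%R by rewrite /= Rmult_1_r; nra.
    have NX : (1 <= N * (D + 1) ^ 2)%R.
      rewrite -(Rmult_1_r 1); apply: Rmult_le_compat; lra.
    set Y := (N * (D + 1) ^ 2)%R in NX *; nra.
  have : (2 / (N * (D + 1) ^ 2 * D) <= 1)%R.
    apply: (Rmult_le_reg_r (N * (D + 1) ^ 2 * D)); first lra.
    rewrite /Rdiv Rmult_assoc Rinv_l; lra.
  lra.
have Fmono : forall m n, (m <= n)%N -> (lam ^ m <= lam ^ n)%R.
  by move=> m n mn; apply: Rle_pow => //; apply/leP.
elim=> [|T IH] s [w sw].
  rewrite /= Rmult_1_l; case: (s y); [apply: pow_le; lra | exact: pow_R1_Rle].
case sy: (s y).
  rewrite avoid_N //; apply: Rmult_le_pos; apply: pow_le; lra.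
rewrite avoid_S //.
have step : (Rsum (fun s' => M0_kernel d adj s s' * avoid d adj y T s') <=
             Rsum (fun s' => M0_kernel d adj s s' * (rho ^ T * lam ^ (hmin (delta Hr) s'))))%R.
  rewrite !RsumE; apply: big_Rle => s' _.
  case: (boolP [exists w, s' w]) => [/existsP [w' sw'] | ne].
    apply: Rmult_le_compat_l; first exact: K_ge0.
    by apply: IH; exists w'.
  rewrite (K_zero _ _ sw); first lra.
  by move=> z; apply/negbTE; move: ne; rewrite negb_exists => /forallP.
apply: (Rle_trans _ _ _ step).
have -> : Rsum (fun s' => M0_kernel d adj s s' * (rho ^ T * lam ^ (hmin (delta Hr) s')))%R =
   (rho ^ T * Rsum (fun s' => M0_kernel d adj s s' * lam ^ (hmin (delta Hr) s')))%R.
  rewrite !RsumE big_distrr; apply: eq_bigr => s' _ /=; ring.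
rewrite /=.
have -> : (rho * rho ^ T * lam ^ hmin (delta Hr) s = rho ^ T * (rho * lam ^ hmin (delta Hr) s))%R by ring.
apply: Rmult_le_compat_l; first by apply: pow_le.
case: (good_state Hr sw sy) => v0 [w0 [sv0 eh a ew0]].
have dr := drift d1 sym irr deg (@hmin_le V (delta Hr)) Fmono (delta_adj Hr) sv0 a ew0.
apply: (Rle_trans _ _ _ dr).
rewrite eh -ew0 /= -/N -/D.
have P0 : (0 < lam ^ (delta Hr w0))%R by apply: pow_lt; lra.
set P := (lam ^ (delta Hr w0))%R in P0 *.
apply: Req_le; rewrite /rho /lam; field; lra.
Qed.

Lemma exp_le x y : (x <= y)%R -> (exp x <= exp y)%R.
Proof.
case/Rle_lt_or_eq_dec => [h|->]; last by apply: Rle_refl.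
by apply: Rlt_le; apply: exp_increasing.
Qed.

Lemma exp_powE a n : (exp a ^ n = exp (INR n * a))%R.
Proof.
elim: n => [|n IH]; first by rewrite /= Rmult_0_l exp_0.
rewrite /= IH -exp_plus -/(INR n.+1) S_INR; congr exp; ring.
Qed.

Lemma narcs2 (V : finType) (adj : rel V) x w :
  symmetric adj -> irreflexive adj -> adj x w -> (2 <= narcs adj)%N.
Proof.
move=> sym irr a.
have nxw : x != w by apply/eqP => E; rewrite E irr in a.
rewrite -(_ : #|pred2 (x, w) (w, x)| = 2%N); last first.
  by rewrite card2 xpair_eqE (negbTE nxw).
apply: subset_leq_card; apply/subsetP => -[u v]; rewrite !inE /=.
by case/orP => /eqP [-> ->] //; rewrite -sym.
Qed.

Lemma narcs_nedges (V : finType) (adj : rel V) :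
  (2 <= narcs adj)%N -> (narcs adj <= 3 * nedges adj)%N.
Proof.
rewrite /nedges => h; have e := odd_double_half (narcs adj).
rewrite -muln2 in e; have : (odd (narcs adj) <= 1)%N by case: odd.
move: e h; set m := narcs adj; set k := m./2; lia.
Qed.

Lemma dist_le (V : finType) (adj : rel V) x y n (Hr : forall v, exists k, reach adj y k v) :
  is_dist adj x y n -> (delta Hr x <= n)%N.
Proof. by case=> [[p [pp [lp <-]]] _]; apply: delta_le; apply: reach_path. Qed.

Lemma dist_pos (V : finType) (adj : rel V) x y n :
  symmetric adj -> irreflexive adj -> is_dist adj x y n -> (0 < n)%N -> (2 <= narcs adj)%N.
Proof.
move=> sym irr [[[|w p] [pp [lp <-]]] _] //= _.
by case/andP: pp => a _; apply: (narcs2 sym irr a).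
Qed.

Theorem lemma1 : forall d : nat, (2 <= d)%N ->
  (exists K : R, (0 < K)%R /\
     forall (V : finType) (adj : rel V) (x y : V) (n : nat),
       symmetric adj -> irreflexive adj ->
       (forall u v, connect adj u v) ->
       (forall u, #|[pred v | adj u v]| <= d * d)%N ->
       is_dist adj x y n ->
       forall T : nat,
         (Rsum_lt T (fun t => avoid d adj y t (init_state x))
            <= K * INR (nedges adj) * INR n)%R)
  /\
  (exists C c : R, (0 < C)%R /\ (0 < c)%R /\
     forall (V : finType) (adj : rel V) (x y : V) (n : nat),
       symmetric adj -> irreflexive adj ->
       (forall u v, connect adj u v) ->
       (forall u, #|[pred v | adj u v]| <= d * d)%N ->
       is_dist adj x y n ->
       exists T : nat,
         (INR T <= C * INR (nedges adj) * INR n)%R /\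
         (1 - exp (- (c * INR n)) <= 1 - avoid d adj y T (init_state x))%R).
Proof.
move=> d d2.
have D4 : (4 <= INR (d * d))%R.
  have : (4 <= d * d)%N by rewrite (_ : 4 = 2 * 2)%N //; apply: leq_mul.
  move=> /leP h; have := le_INR _ _ h; rewrite /=; lra.
have ix : forall (V : finType) (x : V), init_state x x by move=> V x; rewrite /init_state ffunE eqxx.
split.
  exists (3 * (INR (d * d) + 1) / 2)%R; split; first lra.
  move=> V adj x y n sym irr conn deg dist T.
  have Hr := reach_ex y conn.
  have h := part1_ind Hr d2 sym irr deg T (ex_intro _ x (ix V x)).
  apply: (Rle_trans _ _ _ h).
  have hn : (INR (hmin (delta Hr) (init_state x)) <= INR n)%R.
    apply: le_INR; apply/leP; apply: leq_trans (hmin_le _ (ix V x)) (dist_le Hr dist).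
  have N0 := pos_INR (narcs adj).
  apply: (Rle_trans _ (INR (narcs adj) * (INR (d * d) + 1) / 2 * INR n)%R).
    apply: Rmult_le_compat_l => //; rewrite /Rdiv; apply: Rmult_le_pos; [|lra].
    apply: Rmult_le_pos; lra.
  case: (posnP n) => [->|np]; first by rewrite /= !Rmult_0_r; lra.
  have := narcs_nedges (dist_pos sym irr dist np) => /leP /le_INR.
  rewrite mult_INR /= => hh.
  have n0 := pos_INR n.
  set Nn := INR (nedges adj) in hh *; set Na := INR (narcs adj) in hh N0 *.
  set q := (INR (d * d) + 1)%R.
  have q0 : (0 <= q)%R by rewrite /q; lra.
  have : (Na * q <= 3 * q * Nn)%R by nra.
  move=> hq; rewrite /Rdiv.
  have := Rmult_le_compat_r (/ 2 * INR n) _ _ ltac:(apply: Rmult_le_pos; lra) hq.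
  move=> hh2.
  have -> : (Na * q * / 2 * INR n = Na * q * (/ 2 * INR n))%R by ring.
  have -> : (3 * q * / 2 * Nn * INR n = 3 * q * Nn * (/ 2 * INR n))%R by ring.
  exact: hh2.
set M := ((d * d + 1) * (d * d + 1) * (d * d))%N.
have DM : INR M = ((INR (d * d) + 1) * (INR (d * d) + 1) * INR (d * d))%R.
  by rewrite /M !mult_INR plus_INR !mult_INR /=; ring.
exists (3 * INR M)%R, 1%R; split.
  rewrite DM; have : (0 < (INR (d * d) + 1) * (INR (d * d) + 1) * INR (d * d))%R.
    apply: Rmult_lt_0_compat; [apply: Rmult_lt_0_compat|]; lra.
  lra.
split; first lra.
move=> V adj x y n sym irr conn deg dist.
case: (posnP n) => [n0|np].
  exists 0%N; subst n; rewrite /= !Rmult_0_r Ropp_0 exp_0; split; first lra.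
  by case: (_ y); lra.
have N2 := dist_pos sym irr dist np.
exists (M * narcs adj * n)%N.
have Hr := reach_ex y conn.
have hh := narcs_nedges N2; move/leP/le_INR: hh; rewrite mult_INR /= => hh.
have n0 := pos_INR n.
split.
  rewrite (mult_INR (M * narcs adj)) (mult_INR M).
  have M0 := pos_INR M.
  set Nn := INR (nedges adj) in hh *; set Na := INR (narcs adj) in hh *.
  have := Rmult_le_compat_l (INR M) _ _ M0 hh => h1.
  have := Rmult_le_compat_r (INR n) _ _ n0 h1 => h2.
  apply: Rle_trans h2 _; apply: Req_le; ring.
have := part2_ind Hr d2 sym irr deg (ltnW N2) (M * narcs adj * n)%N (ex_intro _ x (ix V x)).
set N := INR (narcs adj).
set D := INR (d * d) in D4 DM *.
have Npos : (0 < N)%R by apply: lt_0_INR; apply/ltP; apply: leq_trans N2.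
set be := (2 / (N * (D + 1) ^ 2 * D))%R.
have X0 : (0 < (D + 1) ^ 2)%R by apply: pow_lt; lra.
have NXD : (0 < N * (D + 1) ^ 2 * D)%R.
  apply: Rmult_lt_0_compat; [apply: Rmult_lt_0_compat|]; lra.
have be0 : (0 <= be)%R.
  rewrite /be /Rdiv; apply: Rmult_le_pos; first lra.
  by apply: Rlt_le; apply: Rinv_0_lt_compat.
have rho0 : (0 <= 1 - be)%R.
  have N1 : (1 <= N)%R by rewrite /N -/(INR 1); apply: le_INR; apply/leP; apply: ltnW.
  have X1 : (1 <= (D + 1) ^ 2)%R by rewrite /= Rmult_1_r; nra.
  have NX : (1 <= N * (D + 1) ^ 2)%R.
    rewrite -(Rmult_1_r 1); apply: Rmult_le_compat; lra.
  have h2 : (2 <= N * (D + 1) ^ 2 * D)%R.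
    set Y := (N * (D + 1) ^ 2)%R in NX *; nra.
  have : (be <= 1)%R.
    apply: (Rmult_le_reg_r (N * (D + 1) ^ 2 * D)); first lra.
    rewrite /be /Rdiv Rmult_assoc Rinv_l; lra.
  lra.
have hp1 : ((1 - be) ^ (M * narcs adj * n) <= exp (- (2 * INR n)))%R.
  apply: Rle_trans (pow_incr _ _ _ (conj rho0 (exp_ineq1_le (- be)))) _.
  rewrite exp_powE; apply: Req_le; congr exp.
  rewrite (mult_INR (M * narcs adj)) (mult_INR M) DM -/N /be /=; field; repeat split; lra.
have hp2 : ((1 + / D) ^ (hmin (delta Hr) (init_state x)) <= exp (INR n))%R.
  apply: Rle_trans (_ : _ <= (1 + / D) ^ n)%R _.
    apply: Rle_pow; first by have := Rinv_0_lt_compat D ltac:(lra); lra.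
    apply/leP; exact: leq_trans (hmin_le _ (ix V x)) (dist_le Hr dist).
  apply: Rle_trans (pow_incr _ _ _ (conj _ (exp_ineq1_le (/ D)))) _.
    by have := Rinv_0_lt_compat D ltac:(lra); lra.
  rewrite exp_powE; apply: exp_le.
  have : (/ D <= 1)%R.
    rewrite -Rinv_1; apply: Rinv_le_contravar; lra.
  move=> h; have := Rmult_le_compat_l (INR n) _ _ n0 h; lra.
move=> ha.
have lam0 : (0 <= 1 + / D)%R by have := Rinv_0_lt_compat D ltac:(lra); lra.
have hb := Rmult_le_compat _ _ _ _ (pow_le _ (M * narcs adj * n) rho0)
   (pow_le _ (hmin (delta Hr) (init_state x)) lam0) hp1 hp2.
have : (exp (- (2 * INR n)) * exp (INR n) = exp (- (1 * INR n)))%R.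
  rewrite -exp_plus; congr exp; ring.
lra.
Qed.
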